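(* Consider a cellular network with $n$ base stations $\mathcal{N}=\{1,\dots,n\}$, base station $i$ serving a nonempty set $\mathcal{J}_i$ of users (pairwise disjoint), channel gains $g_{kj}>0$, noise power $\sigma^2>0$, and for $\mathbf{p}>\mathbf{0}$, $\mathbf{x}\ge\mathbf{0}$, $\mathbf{r}>\mathbf{0}$, $$f_i(\mathbf{x};\mathbf{r},\mathbf{p})=\sum_{j\in\mathcal{J}_i}\frac{r_{ij}}{\log\Big(1+\frac{p_i g_{ij}}{\sum_{k\ne i} p_k g_{kj} x_k+\sigma^2}\Big)}.$$ Let $\mathbf{d}_{\min}>\mathbf{0}$ and consider Problem P0: $$\min_{\mathbf{p}>\mathbf{0},\ \mathbf{r}>\mathbf{0},\ \mathbf{0}<\mathbf{x}\le\mathbf{1}} \mathbf{x}^T\mathbf{p}\quad\text{s.t.}\quad \mathbf{x}=\mathbf{f}(\mathbf{x};\mathbf{r},\mathbf{p}),\quad \mathbf{r}\ge\mathbf{d}_{\min}.$$ Then the optimal solution $(\mathbf{p}^\star,\mathbf{r}^\star,\mathbf{x}^\star)$ of Problem P0 has load vector $\mathbf{x}^\star=\mathbf{1}$.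
   Context: Vector inequalities are componentwise; $\mathbf{1}$ is the all-ones vector; $\log$ is natural logarithm. *)

(* Defs.v *)
From HB Require Import structures.
From mathcomp Require Import all_boot all_order all_algebra.
From mathcomp Require Import all_classical all_reals all_analysis.
Set Implicit Arguments. Unset Strict Implicit. Unset Printing Implicit Defensive.
Import Order.TTheory GRing.Theory Num.Theory.
Local Open Scope ring_scope.

(* Base stations are 'I_n, users are elements of a finite type U,
   J i : {set U} is the set of users served by base station i,
   g k j : channel gain from station k to user j, sigma2 : noise power. *)
Definition load (R : realType) (n : nat) (U : finType) (J : 'I_n -> {set U})
  (g : 'I_n -> U -> R) (sigma2 : R)
  (x : 'I_n -> R) (r : 'I_n -> U -> R) (p : 'I_n -> R) (i : 'I_n) : R :=
  \sum_(j in J i)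
     r i j / ln (1 + p i * g i j /
                  (\sum_(k < n | k != i) p k * g k j * x k + sigma2)).

Definition P0_feasible (R : realType) (n : nat) (U : finType) (J : 'I_n -> {set U})
  (g : 'I_n -> U -> R) (sigma2 : R) (dmin : 'I_n -> U -> R)
  (p : 'I_n -> R) (r : 'I_n -> U -> R) (x : 'I_n -> R) : Prop :=
  (forall i, 0 < p i) /\
  (forall i j, j \in J i -> 0 < r i j) /\
  (forall i, 0 < x i /\ x i <= 1) /\
  (forall i, x i = load J g sigma2 x r p i) /\
  (forall i j, j \in J i -> dmin i j <= r i j).

Definition P0_obj (R : realType) (n : nat) (x p : 'I_n -> R) : R :=
  \sum_(i < n) x i * p i.

(* Main.v *)
Require Import Defs.
From HB Require Import structures.
From mathcomp Require Import all_boot all_order all_algebra.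
From mathcomp Require Import all_classical all_reals all_analysis.
From mathcomp Require Import ring lra.
Import Order.TTheory GRing.Theory Num.Theory.
Local Open Scope ring_scope.

Lemma conc_ln {R : realType} {t a b : R} : 0 <= t -> t <= 1 -> 0 < a -> 0 < b ->
  t * ln a + (1 - t) * ln b <= ln (t * a + (1 - t) * b).
Proof.
move=> t0 t1 a0 b0.
have := @concave_ln R (Itv01 t0 t1) a b a0 b0.
by rewrite !convRE /=.
Qed.

Lemma conc1 {R : realType} {t T : R} : 0 <= t -> t <= 1 -> 0 <= T ->
  t * ln (1 + T) <= ln (1 + t * T).
Proof.
move=> t0 t1 T0.
have := conc_ln t0 t1 (_ : 0 < 1 + T) (ltr01 : (0:R) < 1).
rewrite ln1 mulr0 addr0.
have -> : t * (1 + T) + (1 - t) * 1 = 1 + t * T by ring.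
apply; lra.
Qed.

Lemma half_strict {R : realType} {t : R} : 0 < t -> ln (1 + t) < 2 * ln (1 + t / 2).
Proof.
move=> t0.
have h1 : 0 < 1 + t / 2 by (have : 0 < t / 2 by rewrite divr_gt0); lra.
rewrite -[2]/(1+1) mulrDl mul1r -lnM ?posrE //.
rewrite ltr_ln ?posrE ?mulr_gt0 //; last lra.
have -> : (1 + t / 2) * (1 + t / 2) = 1 + t + (t / 2) ^+ 2 by field.
by rewrite ltrDl exprn_gt0 // divr_gt0.
Qed.

Lemma strict_ln {R : realType} (s t : R) : 0 < s -> s < 1 -> 0 < t ->
  s * ln (1 + t) < ln (1 + s * t).
Proof.
move=> s0 s1 t0.
have hs := half_strict t0.
have h1 : 0 < 1 + t / 2 by (have : 0 < t / 2 by rewrite divr_gt0); lra.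
have h2 : 0 < 1 + t by lra.
case: (lerP s (1/2)) => sh.
- have := conc1 (_ : 0 <= 2 * s) (_ : 2 * s <= 1) (_ : 0 <= t / 2).
  have -> : 2 * s * (t / 2) = s * t by field.
  move=> H; apply: lt_le_trans (H _ _ _); last first.
  + by rewrite divr_ge0 // ltW.
  + lra.
  + by rewrite mulr_ge0 // ltW.
  nra.
- have := conc_ln (_ : 0 <= 2 * (1 - s)) (_ : 2 * (1 - s) <= 1) h1 h2.
  have -> : 2 * (1 - s) * (1 + t / 2) + (1 - 2 * (1 - s)) * (1 + t) = 1 + s * t by field.
  move=> H; apply: lt_le_trans (H _ _); last first.
  + lra.
  + lra.
  nra.
Qed.

Definition Lf {R : realType} {n : nat} {U : finType}
  (g : 'I_n -> U -> R) (sigma2 : R) (p x : 'I_n -> R) (k : 'I_n) (j : U) : R :=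
  ln (1 + p k * g k j / (\sum_(l < n | l != k) p l * g l j * x l + sigma2)).

Lemma den_pos {R : realType} {n : nat} {U : finType}
  (g : 'I_n -> U -> R) (sigma2 : R) (p x : 'I_n -> R) (k : 'I_n) (j : U) :
  (forall k j, 0 < g k j) -> 0 < sigma2 -> (forall l, 0 < p l) -> (forall l, 0 <= x l) ->
  0 < \sum_(l < n | l != k) p l * g l j * x l + sigma2.
Proof.
move=> hg hs hp hx; rewrite ltr_wpDl //; apply: sumr_ge0 => l _.
by rewrite mulr_ge0 // mulr_ge0 // ltW.
Qed.

Lemma Lf_pos {R : realType} {n : nat} {U : finType}
  (g : 'I_n -> U -> R) (sigma2 : R) (p x : 'I_n -> R) (k : 'I_n) (j : U) :
  (forall k j, 0 < g k j) -> 0 < sigma2 -> (forall l, 0 < p l) -> (forall l, 0 <= x l) ->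
  0 < Lf g sigma2 p x k j.
Proof.
move=> hg hs hp hx; rewrite /Lf ln_gt0 // ltrDl divr_gt0 ?mulr_gt0 //.
exact: den_pos.
Qed.

Lemma transfer {R : realType} {n : nat} {U : finType} (J : 'I_n -> {set U})
  (g : 'I_n -> U -> R) (sigma2 : R) (dmin : 'I_n -> U -> R)
  (hg : forall k j, 0 < g k j) (hsigma : 0 < sigma2)
  (p : 'I_n -> R) (r : 'I_n -> U -> R) (x : 'I_n -> R) (p' x' : 'I_n -> R) :
  P0_feasible J g sigma2 dmin p r x ->
  (forall l, 0 < p' l) -> (forall l, 0 < x' l /\ x' l <= 1) ->
  (forall k j, j \in J k -> x k * Lf g sigma2 p x k j <= x' k * Lf g sigma2 p' x' k j) ->
  exists r', P0_feasible J g sigma2 dmin p' r' x'.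
Proof.
move=> [hp [hr [hx [hl hd]]]] hp' hx' hle.
have hx0 l : 0 <= x l by apply: ltW; case: (hx l).
have hx0' l : 0 <= x' l by apply: ltW; case: (hx' l).
pose r' k j := r k j * (x' k * Lf g sigma2 p' x' k j) / (x k * Lf g sigma2 p x k j).
have hB k j : 0 < x k * Lf g sigma2 p x k j.
  by rewrite mulr_gt0 ?Lf_pos //; case: (hx k).
have hrr k j : j \in J k -> r k j <= r' k j.
  move=> hj; rewrite /r' ler_pdivlMr // ler_pM2l ?hr //; exact: hle.
exists r'; split; first by [].
split; first by move=> i j hj; apply: lt_le_trans (hrr _ _ hj); exact: hr.
split; first by [].
split; last by move=> i j hj; apply: le_trans (hrr _ _ hj); exact: hd.
move=> i; rewrite /load.
have -> : \sum_(j in J i) r' i j / ln (1 + p' i * g i j /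
          (\sum_(k < n | k != i) p' k * g k j * x' k + sigma2)) =
          \sum_(j in J i) (x' i / x i) * (r i j / Lf g sigma2 p x i j).
  apply: eq_bigr => j _; rewrite -/(Lf g sigma2 p' x' i j) /r'.
  have h1 := @Lf_pos _ _ _ g sigma2 p' x' i j hg hsigma hp' hx0'.
  have h2 := @Lf_pos _ _ _ g sigma2 p x i j hg hsigma hp hx0.
  have h3 : 0 < x i by case: (hx i).
  by field; rewrite ?gt_eqF.
rewrite -mulr_sumr.
have -> : \sum_(j in J i) r i j / Lf g sigma2 p x i j = x i by rewrite (hl i).
by rewrite mulfVK // gt_eqF //; case: (hx i).
Qed.

Theorem lemma2 (R : realType) (n : nat) (U : finType) (J : 'I_n -> {set U})
  (g : 'I_n -> U -> R) (sigma2 : R) (dmin : 'I_n -> U -> R)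
  (hJne : forall i, J i != finset.set0)
  (hJdisj : forall i k, i != k -> [disjoint J i & J k])
  (hg : forall k j, 0 < g k j)
  (hsigma : 0 < sigma2)
  (hdmin : forall i j, j \in J i -> 0 < dmin i j)
  (pstar : 'I_n -> R) (rstar : 'I_n -> U -> R) (xstar : 'I_n -> R)
  (hfeas : P0_feasible J g sigma2 dmin pstar rstar xstar)
  (hopt : forall p r x, P0_feasible J g sigma2 dmin p r x ->
            P0_obj xstar pstar <= P0_obj x p) :
  forall i, xstar i = 1.
Proof.
move=> i.
have [hp [hr [hx [hl hd]]]] := hfeas.
have [xi0 xi1] := hx i.
case: (ltrP (xstar i) 1) => h; last by apply/le_anti; rewrite xi1 h.
exfalso.
have hx0 l : 0 <= xstar l by apply: ltW; case: (hx l).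
pose D j := \sum_(l < n | l != i) pstar l * g l j * xstar l + sigma2.
pose t j := pstar i * g i j / D j.
pose th j := xstar i * ln (1 + t j) / ln (1 + xstar i * t j).
pose T := \big[Order.max/(2^-1 : R)]_(j : U) th j.
have hD j : 0 < D j by apply: den_pos.
have ht j : 0 < t j by rewrite divr_gt0 ?mulr_gt0.
have hst j : 0 < xstar i * t j by rewrite mulr_gt0.
have hlst j : 0 < ln (1 + xstar i * t j) by apply: ln_gt0; have := hst j; lra.
have hth0 j : 0 <= th j.
  apply: divr_ge0; last exact: ltW.
  apply: mulr_ge0 => //; apply: ln_ge0; have := ht j; lra.
have hth1 j : th j < 1.
  by rewrite ltr_pdivrMr // mul1r strict_ln.
have hT1 : T < 1 by apply: bigmax_lt => [|j _]; [rewrite invf_lt1 // ltr1n|apply: hth1].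
have hT0 : 0 < T.
  apply: lt_le_trans (bigmax_ge_id _ _ _ _); by rewrite invr_gt0.
have hTth j : th j <= T by apply: le_bigmax.
pose p' l := if l == i then T * xstar i * pstar i else pstar l.
pose x' l := if l == i then 1 else xstar l.
have [r' hf'] : exists r', P0_feasible J g sigma2 dmin p' r' x'.
  apply: (@transfer _ _ _ J g sigma2 dmin hg hsigma pstar rstar xstar p' x' hfeas).
  - move=> l; rewrite /p'; case: eqP => _; last exact: hp.
    by rewrite !mulr_gt0.
  - move=> l; rewrite /x'; case: eqP => _; last exact: hx.
    by split; [exact: ltr01|].
  - move=> k j hj; case: (eqVneq k i) => [->|hki].
    + rewrite /x' eqxx mul1r.
      have eqD : \sum_(l < n | l != i) p' l * g l j * x' l =
                 \sum_(l < n | l != i) pstar l * g l j * xstar l.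
        by apply: eq_bigr => l /negbTE hl'; rewrite /p' /x' hl'.
      rewrite /Lf eqD /p' eqxx -/(D j).
      have -> : T * xstar i * pstar i * g i j / D j = T * (xstar i * t j).
        by rewrite /t !mulrA.
      rewrite -/(t j).
      have -> : xstar i * ln (1 + t j) = th j * ln (1 + xstar i * t j).
        by rewrite /th mulfVK // gt_eqF.
      apply: le_trans (conc1 (hth0 j) (ltW (hth1 j)) (ltW (hst j))) _.
      rewrite ler_ln ?posrE; last 2 first.
      * have := hth0 j; have := hst j; have := hT0; nra.
      * have := hth0 j; have := hst j; have := hT0; nra.
      by rewrite lerD2l ler_pM2r.
    + rewrite /x' /p' (negbTE hki) ler_pM2l //; last by case: (hx k).
      have hp' l : 0 < p' l.
        by rewrite /p'; case: eqP => _; [rewrite !mulr_gt0|exact: hp].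
      have hx0' l : 0 <= x' l.
        by rewrite /x'; case: eqP => _; [exact: ler01|].
      have hD' := @den_pos _ _ _ g sigma2 p' x' k j hg hsigma hp' hx0'.
      rewrite /Lf ler_ln ?posrE; last 2 first.
      * by rewrite addr_gt0 // divr_gt0 ?mulr_gt0 //; exact: den_pos.
      * by rewrite (negbTE hki) addr_gt0 // divr_gt0 ?mulr_gt0 //; exact: hD'.
      rewrite (negbTE hki) lerD2l ler_pM2l ?mulr_gt0 // lef_pV2 ?posrE //.
      * rewrite lerD2r; apply: ler_sum => l _; rewrite /p' /x'.
        case: eqP => [->|_] //.
        have : 0 < xstar i * pstar i * g i j by rewrite !mulr_gt0.
        nra.
      * exact: den_pos.
have := hopt _ _ _ hf'.
rewrite /P0_obj (bigD1 i) //= [X in _ <= X](bigD1 i) //=.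
have -> : \sum_(l < n | l != i) x' l * p' l = \sum_(l < n | l != i) xstar l * pstar l.
  by apply: eq_bigr => l /negbTE hl'; rewrite /p' /x' hl'.
rewrite /x' /p' eqxx lerD2r mul1r.
have : 0 < xstar i * pstar i by rewrite mulr_gt0.
nra.
Qed.
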